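(* Let $(G,u,v,\alpha,\beta)$ be a Guvab with $\beta<1$ and $\lim_{k\to\infty}W_k=\frac12$, and let $\xi_k=\mu_k-\nu_k$. Then there exists $N$ such that for every $k\ge N$, either $$\frac12\sum_{w\in V(G)}|\xi_k(w)|=0.5+0.5(1-2\beta)^k\quad\text{or}\quad\frac12\sum_{w\in V(G)}|\xi_k(w)|=0.5-0.5(1-2\beta)^k.$$
   Context: A Guvab is a tuple $(G,u,v,\alpha,\beta)$ where $G$ is a finite, connected, simple graph, $u,v\in V(G)$, and $\alpha,\beta\in[0,1]$ with $\alpha\le\beta$. A random walk on $G$ with starting vertex $w$ and laziness $\gamma$ is the Markov chain $R_0=w$ and, for $i\ge1$, $R_i=R_{i-1}$ with probability $\gamma$ and $R_i=t$ with probability $\frac{1-\gamma}{\deg(R_{i-1})}$ for each neighbor $t$ of $R_{i-1}$. $\mu_k$ is the distribution after $k$ steps of the walk from $u$ with laziness $\alpha$, $\nu_k$ that of the walk from $v$ with laziness $\beta$, and $W_k=W(\mu_k,\nu_k)$ is the Wasserstein ($L^1$ optimal transport) distance with respect to the graph distance: the minimum over transportation plans (nonnegative $T$ on $V(G)\times V(G)$ with marginals $\mu_k,\nu_k$) of $\sum d(w_1,w_2)T(w_1,w_2)$. *)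

(* Defs.v *)
From HB Require Import structures.
From mathcomp Require Import all_boot all_order all_algebra.
From mathcomp Require Import all_classical all_reals all_analysis.
Set Implicit Arguments. Unset Strict Implicit. Unset Printing Implicit Defensive.
Import Order.TTheory GRing.Theory Num.Theory.
Import numFieldNormedType.Exports.
Local Open Scope ring_scope.
Local Open Scope classical_set_scope.

Section Guvab.
Variables (R : realType) (V : finType) (e : rel V).

Definition simple_connected_graph : Prop :=
  symmetric e /\ irreflexive e /\ (forall x y : V, connect e x y).

Definition walk_of_len (x y : V) (n : nat) : bool :=
  [exists p : n.-tuple V, path e x p && (last x p == y)].

(* graph distance: length of a shortest walk (= shortest path);
   for a connected graph such a walk of length < #|V| always exists. *)
Definition gdist (x y : V) : nat := find (walk_of_len x y) (iota 0 #|V|).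

Definition deg (x : V) : nat := #|[set y | e x y]|.

Definition trans (gamma : R) (x y : V) : R :=
  if x == y then gamma
  else if e x y then (1 - gamma) / (deg x)%:R else 0.

Fixpoint walk_dist (gamma : R) (w : V) (k : nat) : V -> R :=
  match k with
  | 0 => fun y => if y == w then 1 else 0
  | k'.+1 => fun y => \sum_(x : V) walk_dist gamma w k' x * trans gamma x y
  end.

Definition transport_plan (mu nu : V -> R) (T : V -> V -> R) : Prop :=
  (forall a b, 0 <= T a b) /\
  (forall a, \sum_(b : V) T a b = mu a) /\
  (forall b, \sum_(a : V) T a b = nu b).

Definition plan_cost (T : V -> V -> R) : R :=
  \sum_(a : V) \sum_(b : V) (gdist a b)%:R * T a b.

(* L^1 Wasserstein distance w.r.t. graph distance (the minimum is attained,
   so it equals the infimum) *)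
Definition wasserstein (mu nu : V -> R) : R :=
  inf [set c | exists T, transport_plan mu nu T /\ c = plan_cost T].

End Guvab.

(* Main.v *)
Require Import Defs.
From HB Require Import structures.
From mathcomp Require Import all_boot all_order all_algebra.
From mathcomp Require Import all_classical all_reals all_analysis.
From mathcomp Require Import ring lra.
Import Order.TTheory GRing.Theory Num.Theory.
Import numFieldNormedType.Exports.
Local Open Scope ring_scope.
Local Open Scope classical_set_scope.

Set Implicit Arguments. Unset Strict Implicit. Unset Printing Implicit Defensive.


Section Walk.
Variables (R : realType) (V : finType) (e : rel V).
Hypothesis esym : symmetric e.
Hypothesis eirr : irreflexive e.
Hypothesis degP : forall x, (0 < deg e x)%N.
Variable g : R.
Hypothesis g0 : 0 <= g.
Hypothesis g1 : g <= 1.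

Local Notation p k x y := (walk_dist e g x k y).

Lemma deg_ge1 x : 1 <= (deg e x)%:R :> R.
Proof. by rewrite ler1n degP. Qed.

Lemma trans_ge0 x y : 0 <= trans e g x y.
Proof.
rewrite /trans; case: eqP => // _; case: (e x y) => //.
apply: divr_ge0; [by rewrite subr_ge0 | exact: ler0n].
Qed.

Lemma trans_split x y : trans e g x y =
  (if y == x then g else 0) + (if e x y then (1 - g) / (deg e x)%:R else 0).
Proof.
rewrite /trans eq_sym; case: eqP => [->|_]; last by rewrite add0r.
by rewrite eirr addr0.
Qed.

Lemma deg_sum x : \sum_y (if e x y then 1 else 0) = (deg e x)%:R :> R.
Proof.
rewrite /deg -big_mkcond /= -sum1_card natr_sum.
by apply: eq_bigl => y; rewrite unfold_in /= asboolb.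
Qed.

Lemma trans_sum x : \sum_y trans e g x y = 1.
Proof.
under eq_bigr do rewrite trans_split.
rewrite big_split /= -big_mkcond /= big_pred1_eq.
have -> : \sum_y (if e x y then (1 - g) / (deg e x)%:R else 0)
   = (1 - g) / (deg e x)%:R * \sum_y (if e x y then 1 else 0).
  by rewrite big_distrr /=; apply: eq_bigr => y _; case: (e x y); rewrite ?mulr1 ?mulr0.
rewrite deg_sum mulfVK; first by ring.
by rewrite pnatr_eq0 -lt0n degP.
Qed.

Lemma trans_rev x y :
  (deg e x)%:R * trans e g x y = (deg e y)%:R * trans e g y x.
Proof.
rewrite /trans eq_sym; case: eqP => [->//|_]; rewrite esym.
case: (e y x); last by rewrite !mulr0.
have hx : (deg e x)%:R != 0 :> R by rewrite pnatr_eq0 -lt0n degP.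
have hy : (deg e y)%:R != 0 :> R by rewrite pnatr_eq0 -lt0n degP.
by rewrite mulrCA mulfV // mulr1 mulrCA mulfV // mulr1.
Qed.

Lemma wd_ge0 k x y : 0 <= p k x y.
Proof.
elim: k y => [|k IH] y /=; first by case: eqP.
by apply: sumr_ge0 => z _; apply: mulr_ge0 => //; apply: trans_ge0.
Qed.

Lemma wd_sum k x : \sum_y p k x y = 1.
Proof.
elim: k => [|k IH] /=.
  by rewrite (bigD1 x) //= eqxx big1 ?addr0 // => y /negbTE ->.
rewrite exchange_big /= -[RHS]IH; apply: eq_bigr => z _.
by rewrite -big_distrr /= trans_sum mulr1.
Qed.

Lemma wd_le1 k x y : p k x y <= 1.
Proof.
rewrite -(wd_sum k x) (bigD1 y) //= lerDl.
by apply: sumr_ge0 => z _; apply: wd_ge0.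
Qed.

Lemma wd_CK k l x y : p (k + l) x y = \sum_z p k x z * p l z y.
Proof.
elim: l y => [|l IH] y.
  rewrite addn0 (bigD1 y) //= eqxx mulr1 big1 ?addr0 // => z /negbTE.
  by rewrite eq_sym => ->; rewrite mulr0.
rewrite addnS /=.
under eq_bigr do rewrite IH big_distrl /=.
rewrite exchange_big /=; apply: eq_bigr => w _.
by rewrite big_distrr /=; apply: eq_bigr => z _; rewrite mulrA.
Qed.

Lemma wd_1 x y : p 1 x y = trans e g x y.
Proof.
rewrite /= (bigD1 x) //= eqxx mul1r big1 ?addr0 // => z /negbTE ->.
by rewrite mul0r.
Qed.

Lemma wd_first k x y : p k.+1 x y = \sum_z trans e g x z * p k z y.
Proof. by rewrite -add1n wd_CK; apply: eq_bigr => z _; rewrite wd_1. Qed.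

Lemma wd_rev k x y : (deg e x)%:R * p k x y = (deg e y)%:R * p k y x.
Proof.
elim: k x y => [|k IH] x y.
  by rewrite /=; case: eqP => [->|/eqP]; rewrite ?eqxx // eq_sym => /negbTE ->; rewrite !mulr0.
rewrite wd_first /= big_distrr /= big_distrr /=.
apply: eq_bigr => z _.
rewrite mulrA trans_rev -mulrA mulrCA IH mulrCA.
by rewrite [trans _ _ _ _ * _]mulrC.
Qed.

Lemma wd_ge_term k l x z y : p k x z * p l z y <= p (k + l) x y.
Proof.
rewrite wd_CK (bigD1 z) //= lerDl.
by apply: sumr_ge0 => w _; apply: mulr_ge0; apply: wd_ge0.
Qed.


Lemma sum_ge_term (F : V -> R) y0 : (forall y, 0 <= F y) -> F y0 <= \sum_y F y.
Proof.
move=> h; rewrite (bigD1 y0) //= lerDl.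
by apply: sumr_ge0 => y _; apply: h.
Qed.

Lemma pad l j x y : 0 < p l x y -> 0 < p j y y -> 0 < p (l + j) x y.
Proof.
move=> h1 h2; apply: (lt_le_trans _ (wd_ge_term l j x y y)).
exact: mulr_gt0.
Qed.

Lemma pow_pos j i y : 0 < p j y y -> 0 < p (j * i) y y.
Proof.
move=> h; elim: i => [|i IH]; first by rewrite muln0 /= eqxx ltr01.
by rewrite mulnSr; apply: pad.
Qed.

Lemma pos_pair u l1 l2 x y : 0 < p l1 u x -> 0 < p l2 u y -> 0 < p (l1 + l2) x y.
Proof.
move=> h1 h2.
have h3 : 0 < p l1 x u.
  have hx : 0 < (deg e x)%:R :> R by rewrite ltr0n degP.
  have hu : 0 < (deg e u)%:R :> R by rewrite ltr0n degP.
  have := wd_rev l1 u x.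
  move=> E; have : 0 < (deg e x)%:R * p l1 x u by rewrite -E mulr_gt0.
  by rewrite pmulr_rgt0.
apply: (lt_le_trans _ (wd_ge_term l1 l2 x u y)).
exact: mulr_gt0.
Qed.

Lemma nbr_exists x : exists z, e x z.
Proof.
case: (pickP (e x)) => [z ez | none]; first by exists z.
have := degP x; rewrite -(ltr0n R) -deg_sum big1 ?ltxx // => y _.
by rewrite none.
Qed.

Hypothesis g1s : g < 1.

Lemma trans_pos x z : e x z -> 0 < trans e g x z.
Proof.
move=> exz; rewrite /trans; case: eqP => [xz|_].
  by move: exz; rewrite xz eirr.
by rewrite exz divr_gt0 ?ltr0n ?degP // subr_gt0.
Qed.

Lemma wd_path s x : path e x s -> 0 < p (size s) x (last x s).
Proof.
elim: s x => [|z s IH] x; first by rewrite /= eqxx ltr01.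
case/andP => exz pz.
rewrite (wd_first (size s)).
change (last x (z :: s)) with (last z s).
have h := @sum_ge_term (fun y => trans e g x y * p (size s) y (last z s)) z.
have h2 : 0 < trans e g x z * p (size s) z (last z s).
  by apply: mulr_gt0; [apply: trans_pos | apply: IH].
apply: (lt_le_trans h2); apply: h => y.
by apply: mulr_ge0; [apply: trans_ge0 | apply: wd_ge0].
Qed.

Lemma conn_pos x y : connect e x y -> exists l, 0 < p l x y.
Proof.
move=> /connectP [s ps ->]; exists (size s); exact: wd_path.
Qed.

Lemma two_pos y : 0 < p 2 y y.
Proof.
have [z eyz] := nbr_exists y.
have := wd_ge_term 1 1 y z y; rewrite !wd_1 => h.
apply: (lt_le_trans _ h); apply: mulr_gt0; apply: trans_pos => //.
by rewrite esym.
Qed.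

Section Doeblin.
Variables (c : pred V) (T : nat) (y0 w : V) (d : R).
Hypothesis cy0 : c y0.
Hypothesis d0 : 0 < d.
Hypothesis dK : forall x, c x -> d <= p T x y0.
Hypothesis K0 : forall x y, c x -> ~~ c y -> p T x y = 0.

Lemma d1 : d <= 1.
Proof. exact: le_trans (dK cy0) (wd_le1 _ _ _). Qed.

Lemma doeblin_step k a eps :
  (forall x, c x -> a <= p k x w <= a + eps) ->
  forall x, c x ->
    d * p k y0 w + (1 - d) * a <= p (T + k) x w <=
    d * p k y0 w + (1 - d) * a + (1 - d) * eps.
Proof.
move=> hb x cx; rewrite wd_CK.
have sK : \sum_y p T x y = 1 by apply: wd_sum.
have [ha1 ha2] : a <= p k y0 w /\ p k y0 w <= a + eps by apply/andP; apply: hb.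
have L1 : d * (p k y0 w - a) <= \sum_y p T x y * (p k y w - a).
  apply: le_trans (_ : p T x y0 * (p k y0 w - a) <= _).
    by apply: ler_wpM2r; [rewrite subr_ge0 | apply: dK].
  apply: sum_ge_term => y; case cy: (c y).
    have /andP[h _] := hb y cy.
    by apply: mulr_ge0; [apply: wd_ge0 | rewrite subr_ge0].
  by rewrite K0 ?cy // mul0r.
have L2 : d * (a + eps - p k y0 w) <= \sum_y p T x y * (a + eps - p k y w).
  apply: le_trans (_ : p T x y0 * (a + eps - p k y0 w) <= _).
    by apply: ler_wpM2r; [rewrite subr_ge0 | apply: dK].
  apply: sum_ge_term => y; case cy: (c y).
    have /andP[_ h] := hb y cy.
    by apply: mulr_ge0; [apply: wd_ge0 | rewrite subr_ge0].
  by rewrite K0 ?cy // mul0r.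
have E1 : \sum_y p T x y * (p k y w - a) = \sum_y p T x y * p k y w - a.
  under eq_bigr do rewrite mulrBr.
  by rewrite sumrB -big_distrl /= sK mul1r.
have E2 : \sum_y p T x y * (a + eps - p k y w) = a + eps - \sum_y p T x y * p k y w.
  under eq_bigr do rewrite mulrBr.
  by rewrite sumrB -big_distrl /= sK mul1r.
rewrite E1 in L1; rewrite E2 in L2.
apply/andP; split; nra.
Qed.

Hypothesis T0 : (0 < T)%N.

Lemma doeblin_iter j k0 : exists a, forall x, c x ->
  a <= p (j * T + k0) x w <= a + (1 - d) ^+ j.
Proof.
elim: j k0 => [|j IH] k0.
  exists 0 => x _; rewrite mul0n add0n expr0 add0r wd_ge0 wd_le1 //.
have [a ha] := IH k0.
exists (d * p (j * T + k0) y0 w + (1 - d) * a) => x cx.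
rewrite mulSn -addnA exprS.
exact: doeblin_step.
Qed.

Lemma doeblin_conv (eps : R) : 0 < eps -> exists N, forall k, (N <= k)%N ->
  exists a, forall x, c x -> a <= p k x w <= a + eps.
Proof.
move=> eps0.
have hz : `|1 - d| < 1.
  have hd1 := d1; rewrite ger0_norm ?subr_ge0 // ltrBlDr ltrDl //.
have := cvg_expr hz; move=> /cvgr_dist_lt /(_ eps eps0).
case=> N _ HN; exists (N * T)%N => k hk.
have hq : (N <= k %/ T)%N by rewrite leq_divRL.
have [a ha] := doeblin_iter (k %/ T) (k %% T).
exists a => x cx; rewrite -divn_eq in ha.
have /andP[h1 h2] := ha x cx; rewrite h1 /=.
apply: le_trans h2 _; rewrite lerD2l.
have := HN _ hq; rewrite /= sub0r normrN => h.
by apply: le_trans (ltW h); apply: ler_norm.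
Qed.

End Doeblin.

Lemma ident (c : pred V) (dw G : V -> R) (D W a eps : R) :
  (forall x, 0 <= dw x) -> \sum_(x | c x) dw x = D -> 0 < D ->
  \sum_(x | c x) dw x * G x = W ->
  (forall x, c x -> a <= G x <= a + eps) ->
  forall x, c x -> `|G x - W / D| <= eps.
Proof.
move=> dw0 hD D0 hW hb x cx.
have L : a * D <= W.
  rewrite -hD -hW big_distrr /=; apply: ler_sum => y cy.
  rewrite mulrC; apply: ler_wpM2l => //; by have /andP[] := hb y cy.
have U : W <= (a + eps) * D.
  rewrite -hD -hW big_distrr /=; apply: ler_sum => y cy.
  rewrite [_ * dw y]mulrC; apply: ler_wpM2l => //; by have /andP[] := hb y cy.
have L' : a <= W / D by rewrite ler_pdivlMr.
have U' : W / D <= a + eps by rewrite ler_pdivrMr.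
have /andP[h1 h2] := hb x cx.
rewrite ler_norml; apply/andP; split; lra.
Qed.


Lemma fin_eventually (c : pred V) (P : V -> nat -> Prop) :
  (forall x, c x -> exists n, forall m, (n <= m)%N -> P x m) ->
  exists n, forall x m, c x -> (n <= m)%N -> P x m.
Proof.
move=> h.
suff : forall s : seq V, exists n, forall x m, x \in s -> c x -> (n <= m)%N -> P x m.
  by case/(_ (enum V)) => n hn; exists n => x m cx; apply: hn; rewrite ?mem_enum.
elim=> [|z s [n IH]]; first by exists 0%N.
case cz: (c z).
  have [n' hn'] := h z cz.
  exists (maxn n n') => x m; rewrite inE => /orP [/eqP -> _|xs cx] hm.
    by apply: hn'; apply: leq_trans hm; apply: leq_maxr.
  by apply: IH => //; apply: leq_trans hm; apply: leq_maxl.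
exists n => x m; rewrite inE => /orP [/eqP -> |xs cx hm]; first by rewrite cz.
exact: IH.
Qed.

Lemma fin_min (c : pred V) (F : V -> R) :
  (forall x, c x -> 0 < F x) -> exists2 d, 0 < d & forall x, c x -> d <= F x.
Proof.
move=> h.
suff : forall s : seq V, exists2 d, 0 < d & forall x, x \in s -> c x -> d <= F x.
  by case/(_ (enum V)) => d d0 hd; exists d => // x cx; apply: hd; rewrite ?mem_enum.
elim=> [|z s [d d0 IH]]; first by exists 1.
case cz: (c z).
  exists (Order.min d (F z)); first by rewrite lt_min d0 h.
  move=> x; rewrite inE => /orP [/eqP -> _|xs cx]; rewrite ge_min.
    by rewrite lexx orbT.
  by rewrite IH.
exists d => // x; rewrite inE => /orP [/eqP -> |xs cx]; first by rewrite cz.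
exact: IH.
Qed.

Let S := \sum_x (deg e x)%:R : R.

Lemma deg_le x : (deg e x)%:R <= #|V|%:R :> R.
Proof.
rewrite -deg_sum -sum1_card natr_sum; apply: ler_sum => y _.
by case: (e x y).
Qed.

Lemma conv_gen (c : pred V) T y0 w (D : R) :
  (0 < T)%N -> c y0 -> (forall x, c x -> 0 < p T x y0) ->
  (forall x y, c x -> ~~ c y -> p T x y = 0) ->
  \sum_(x | c x) (deg e x)%:R = D -> 0 < D ->
  forall eps : R, 0 < eps -> exists N, forall k, (N <= k)%N ->
  \sum_(x | c x) p k w x = 1 ->
  forall x, c x -> `|p k w x - (deg e x)%:R / D| <= eps.
Proof.
move=> T0 cy0 hpos K0 hD D0 eps eps0.
have [d d0 hd] := fin_min hpos.
have nV : 0 < #|V|%:R :> R by rewrite ltr0n; apply/card_gt0P; exists w.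
have eps'0 : 0 < eps / #|V|%:R by apply: divr_gt0.
have [N HN] := doeblin_conv w cy0 d0 hd K0 T0 eps'0.
exists N => k hk hsum x cx.
have [a ha] := HN k hk.
have hw : 0 < (deg e w)%:R :> R by rewrite ltr0n degP.
have E : \sum_(y | c y) (deg e y)%:R * p k y w = (deg e w)%:R.
  transitivity ((deg e w)%:R * \sum_(y | c y) p k w y); last by rewrite hsum mulr1.
  rewrite big_distrr /=; apply: eq_bigr => y _.
  by rewrite wd_rev.
have := ident (fun y => ler0n _ (deg e y)) hD D0 E ha cx.
have -> : p k w x = (deg e x)%:R / (deg e w)%:R * p k x w.
  by rewrite mulrAC wd_rev mulrAC mulfV ?mul1r // gt_eqF.
have -> : (deg e x)%:R / (deg e w)%:R * p k x w - (deg e x)%:R / D =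
  (deg e x)%:R / (deg e w)%:R * (p k x w - (deg e w)%:R / D).
  by field; rewrite ?gt_eqF.
move=> h; rewrite normrM ger0_norm; last by rewrite divr_ge0 ?ler0n.
apply: le_trans (_ : #|V|%:R * (eps / #|V|%:R) <= _); last by rewrite mulrC mulfVK ?gt_eqF.
apply: ler_pM.
- by rewrite divr_ge0 ?ler0n.
- by [].
- apply: le_trans (deg_le x).
  rewrite ler_pdivrMr // ler_peMr ?ler0n //; exact: deg_ge1.
- exact: h.
Qed.

End Walk.


Section Wass.
Variables (R : realType) (V : finType) (e : rel V).

Lemma gdist_refl a : gdist e a a = 0%N.
Proof.
rewrite /gdist.
have hV : (0 < #|V|)%N by apply/card_gt0P; exists a.
case: #|V| hV => // n _.
rewrite /= /walk_of_len.
have -> : [exists p : 0.-tuple V, path e a p && (last a p == a)] = true.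
  apply/existsP; exists [tuple]; by rewrite /= eqxx.
by [].
Qed.

Lemma gdist_le a b : (gdist e a b <= #|V|)%N.
Proof. by rewrite /gdist; apply: leq_trans (find_size _ _) _; rewrite size_iota. Qed.

Lemma plan_cost_ge0 (T : V -> V -> R) : (forall a b, 0 <= T a b) -> 0 <= plan_cost e T.
Proof.
move=> h; apply: sumr_ge0 => a _; apply: sumr_ge0 => b _.
by apply: mulr_ge0 => //; apply: ler0n.
Qed.

Lemma W_le_cost (mu nu : V -> R) T : transport_plan mu nu T ->
  wasserstein e mu nu <= plan_cost e T.
Proof.
move=> hT; rewrite /wasserstein.
have hl : has_lbound [set c | exists T, transport_plan mu nu T /\ c = plan_cost e T].
  exists 0 => c [T' [[h _] ->]]; exact: plan_cost_ge0.
by apply: ge_inf hl _ _; exists T.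
Qed.

Variables (mu nu : V -> R).
Hypothesis mu0 : forall a, 0 <= mu a.
Hypothesis nu0 : forall a, 0 <= nu a.
Hypothesis smn : \sum_a mu a = \sum_a nu a.

Let P a := if mu a <= nu a then 0 else mu a - nu a.
Let Q a := if mu a <= nu a then nu a - mu a else 0.
Let Mn a := if mu a <= nu a then mu a else nu a.
Let m := \sum_a P a.

Lemma P0 a : 0 <= P a. Proof. rewrite /P; case: (leP (mu a) (nu a)) => //; lra. Qed.
Lemma Q0 a : 0 <= Q a. Proof. rewrite /Q; case: (leP (mu a) (nu a)) => //; lra. Qed.
Lemma Mn0 a : 0 <= Mn a. Proof. by rewrite /Mn; case: (leP (mu a) (nu a)). Qed.
Lemma MnP a : Mn a + P a = mu a. Proof. rewrite /Mn /P; case: (leP (mu a) (nu a)) => _; lra. Qed.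
Lemma MnQ a : Mn a + Q a = nu a. Proof. rewrite /Mn /Q; case: (leP (mu a) (nu a)) => _; lra. Qed.
Lemma sumQ : \sum_a Q a = m.
Proof.
have : \sum_a (Mn a + Q a) = \sum_a (Mn a + P a).
  by under eq_bigr do rewrite MnQ; under [RHS]eq_bigr do rewrite MnP.
by rewrite !big_split /= => /addrI.
Qed.

Let Tp a b := (if a == b then Mn a else 0) + P a * Q b / m.

Lemma Tp_plan : transport_plan mu nu Tp.
Proof.
split; [|split].
- move=> a b; rewrite /Tp; apply: addr_ge0.
    by case: eqP => // _; apply: Mn0.
  apply: divr_ge0; [apply: mulr_ge0; [apply: P0 | apply: Q0] | apply: sumr_ge0 => *; apply: P0].
- move=> a; rewrite /Tp big_split /= (bigD1 a) //= eqxx big1 ?addr0; last first.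
    by move=> b /negbTE; rewrite eq_sym => ->.
  rewrite -big_distrl -big_distrr /= sumQ -MnP; congr (_ + _).
  have [m0|m0] := eqVneq m 0.
    have : P a = 0.
      apply/eqP; rewrite eq_le P0 andbT -m0 /m (bigD1 a) //= lerDl.
      by apply: sumr_ge0 => *; apply: P0.
    by move=> ->; rewrite !mul0r.
  by rewrite mulfK.
- move=> b; rewrite /Tp big_split /= (bigD1 b) //= eqxx big1 ?addr0; last first.
    by move=> a /negbTE ->.
  under eq_bigr do rewrite mulrAC.
  rewrite -big_distrl /= -/m -MnQ; congr (_ + _).
  have [m0|m0] := eqVneq m 0.
    have : Q b = 0.
      apply/eqP; rewrite eq_le Q0 andbT -m0 -sumQ (bigD1 b) //= lerDl.
      by apply: sumr_ge0 => *; apply: Q0.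
    by move=> ->; rewrite !mulr0.
  by rewrite -big_distrl /= -/m mulfV ?mul1r.
Qed.

Lemma W_bound : wasserstein e mu nu <= #|V|%:R * \sum_a `|mu a - nu a|.
Proof.
apply: le_trans (W_le_cost Tp_plan) _.
have m0 : 0 <= m by apply: sumr_ge0 => *; apply: P0.
have hm : m <= \sum_a `|mu a - nu a|.
  apply: ler_sum => a _; rewrite /P; case: (leP (mu a) (nu a)) => _; first by [].
  exact: ler_norm.
apply: le_trans (_ : #|V|%:R * m <= _); last by apply: ler_wpM2l.
rewrite /plan_cost /Tp.
have E : forall a b, (gdist e a b)%:R * ((if a == b then Mn a else 0) + P a * Q b / m)
   = (gdist e a b)%:R * (P a * Q b / m) :> R.
  move=> a b; case: eqP => [->|_]; last by rewrite add0r.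
  by rewrite gdist_refl mul0r mul0r.
under eq_bigr do under eq_bigr do rewrite E.
apply: le_trans (_ : \sum_a \sum_b #|V|%:R * (P a * Q b / m) <= _).
  apply: ler_sum => a _; apply: ler_sum => b _; apply: ler_wpM2r.
    apply: divr_ge0 => //; apply: mulr_ge0; [apply: P0 | apply: Q0].
  by rewrite ler_nat gdist_le.
have -> : \sum_a \sum_b #|V|%:R * (P a * Q b / m) = #|V|%:R * (m * m / m) :> R.
  transitivity (\sum_a (#|V|%:R * P a / m) * \sum_b Q b).
    apply: eq_bigr => a _; rewrite big_distrr /=; apply: eq_bigr => b _; ring.
  by rewrite sumQ -big_distrl /= -big_distrl -big_distrr /= -/m; ring.
have [->|mn0] := eqVneq m 0; first by rewrite !mulr0 mul0r mulr0.
by rewrite mulfK.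
Qed.

End Wass.


Section Eigen.
Variables (R : realType) (V : finType) (e : rel V).
Hypothesis esym : symmetric e.
Hypothesis eirr : irreflexive e.
Hypothesis degP : forall x, (0 < deg e x)%N.
Variable s : V -> bool.
Hypothesis sE : forall x y, e x y -> s y = ~~ s x.
Variable g : R.
Hypothesis g0 : 0 <= g.
Hypothesis g1 : g <= 1.
Let t x : R := if s x then 1 else -1.

Lemma eigen k v : \sum_x t x * walk_dist e g v k x = (2 * g - 1) ^+ k * t v.
Proof.
elim: k => [|k IH].
  rewrite expr0 mul1r (bigD1 v) //= eqxx mulr1 big1 ?addr0 //.
  by move=> x /negbTE ->; rewrite mulr0.
rewrite exprS -mulrA -IH big_distrr /=.
under eq_bigr do rewrite big_distrr /=.
rewrite exchange_big /=; apply: eq_bigr => x _.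
have inner : \sum_y t y * trans e g x y = (2 * g - 1) * t x.
  under eq_bigr do rewrite trans_split //.
  have E : forall y, t y * ((if y == x then g else 0) +
      (if e x y then (1 - g) / (deg e x)%:R else 0)) =
      (if y == x then g * t x else 0) +
      (- t x * (1 - g) / (deg e x)%:R) * (if e x y then 1 else 0).
    move=> y; case: eqP => [->|_] /=; first by rewrite eirr /=; ring.
    case exy: (e x y) => /=; last by ring.
    rewrite /t (sE exy); case: (s x) => /=; ring.
  under eq_bigr do rewrite E.
  rewrite big_split /= -big_mkcond /= big_pred1_eq -big_distrr /= deg_sum.
  have hd : (deg e x)%:R != 0 :> R by rewrite pnatr_eq0 -lt0n degP.
  field; exact: hd.
transitivity (walk_dist e g v k x * \sum_y t y * trans e g x y).
  by rewrite big_distrr /=; apply: eq_bigr => y _; ring.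
rewrite inner; ring.
Qed.

End Eigen.

Section Bip.
Variables (R : realType) (V : finType) (e : rel V).
Hypothesis esym : symmetric e.
Hypothesis eirr : irreflexive e.
Hypothesis degP : forall x, (0 < deg e x)%N.
Hypothesis conn : forall x y, connect e x y.
Let h00 : (0:R) <= 0 := lexx 0.
Let h01 : (0:R) <= 1 := ler01.
Let h01s : (0:R) < 1 := ltr01.
Local Notation p0 k x y := (walk_dist e (0:R) x k y).

Lemma ev_eventually x y l : ~~ odd l -> 0 < p0 l x y ->
  exists n, forall m, (n <= m)%N -> 0 < p0 (2 * m) x y.
Proof.
move=> ol hl; exists l./2 => m hm.
have El : l = (2 * l./2)%N by rewrite mul2n -[LHS]odd_double_half (negbTE ol) add0n.
have -> : (2 * m = l + 2 * (m - l./2))%N by rewrite {1}El -mulnDr subnKC.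
apply: (pad h00 h01) => //.
apply: (pow_pos h00 h01); exact: (two_pos esym eirr degP h00 h01 h01s).
Qed.

Definition Ssum : R := \sum_x (deg e x)%:R.



Lemma conv_nonlazy (c : pred V) y0 w D : c y0 ->
  (forall x, c x -> exists l, ~~ odd l /\ 0 < p0 l x y0) ->
  (forall x y m, c x -> ~~ c y -> p0 (2 * m) x y = 0) ->
  \sum_(x | c x) (deg e x)%:R = D -> 0 < D ->
  forall eps : R, 0 < eps -> exists N, forall k, (N <= k)%N ->
  \sum_(x | c x) p0 k w x = 1 ->
  forall x, c x -> `|p0 k w x - (deg e x)%:R / D| <= eps.
Proof.
move=> cy0 hpos K0 hD D0.
have [n hn] : exists n, forall x m, c x -> (n <= m)%N -> 0 < p0 (2 * m) x y0.
  apply: fin_eventually => x cx.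
  have [l [ol hl]] := hpos x cx.
  exact: ev_eventually hl.
apply: (conv_gen esym eirr degP h00 h01 (T := (2 * n.+1)%N) (y0 := y0)) => //.
- by move=> x cx; apply: (hn x n.+1 cx).
- by move=> x y cx cy; apply: K0.
Qed.


Definition ev (u z : V) : bool := `[< exists l, 0 < p0 (2 * l) u z >].

Lemma pos_even u z l : 0 < p0 l u z -> ~~ odd l -> ev u z.
Proof.
move=> hl ol; apply/asboolP; exists l./2.
have El : (2 * l./2)%N = l by rewrite mul2n -[RHS]odd_double_half (negbTE ol) add0n.
by rewrite El.
Qed.

Lemma ev_u u : ev u u.
Proof. by apply: (@pos_even u u 0%N) => //=; rewrite eqxx ltr01. Qed.

Lemma mul_pos k l x y z : 0 < p0 k x y -> 0 < p0 l y z -> 0 < p0 (k + l) x z.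
Proof.
move=> h1 h2; apply: lt_le_trans (wd_ge_term e h00 h01 k l x y z).
exact: mulr_gt0.
Qed.

Lemma all_ev_pos u x y : ev u x -> ev u y -> exists l, ~~ odd l /\ 0 < p0 l x y.
Proof.
move=> /asboolP [a ha] /asboolP [b hb]; exists (2 * a + 2 * b)%N; split.
  by rewrite oddD !oddM.
exact: (pos_pair esym degP h00 h01 ha hb).
Qed.

Section Bipartite.
Variables (u z0 : V).
Hypothesis nz0 : ~~ ev u z0.

Lemma E0 z l : 0 < p0 l u z -> ev u z = ~~ odd l.
Proof.
move=> hl; case ol: (odd l); last by apply: pos_even hl _; rewrite ol.
apply/negP => /asboolP [a ha].
have [l' hl'] := conn_pos eirr degP h00 h01 h01s (conn z z0).
have h1 := mul_pos hl hl'.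
have h2 := mul_pos ha hl'.
case ol': (odd l').
  by move: nz0; rewrite (pos_even h1) // oddD ol ol'.
by move: nz0; rewrite (pos_even h2) // oddD oddM ol'.
Qed.

Lemma E1 x y : e x y -> ev u y = ~~ ev u x.
Proof.
move=> exy.
have [l hl] := conn_pos eirr degP h00 h01 h01s (conn u x).
have h1 : 0 < p0 1 x y.
  by rewrite (wd_1 e 0); apply: (trans_pos eirr degP h01s).
have h2 := mul_pos hl h1.
by rewrite (E0 hl) (E0 h2) addn1 /= negbK.
Qed.

Lemma E2 x y k : 0 < p0 k x y -> ev u y = ev u x (+) odd k.
Proof.
move=> hk.
have [l hl] := conn_pos eirr degP h00 h01 h01s (conn u x).
rewrite (E0 (mul_pos hl hk)) (E0 hl) oddD.
by case: (odd l); case: (odd k).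
Qed.

Lemma E2z x y k : ev u y != ev u x (+) odd k -> p0 k x y = 0.
Proof.
move=> hne; have := wd_ge0 e h00 h01 k x y; rewrite le_eqVlt => /orP [/eqP <- //|h].
by move: hne; rewrite (E2 h) eqxx.
Qed.

Lemma class_pos x y : ev u x = ev u y -> exists l, ~~ odd l /\ 0 < p0 l x y.
Proof.
move=> hxy.
have [l1 h1] := conn_pos eirr degP h00 h01 h01s (conn u x).
have [l2 h2] := conn_pos eirr degP h00 h01 h01s (conn u y).
exists (l1 + l2)%N; split; last exact: (pos_pair esym degP h00 h01 h1 h2).
move: hxy; rewrite (E0 h1) (E0 h2) oddD.
by case: (odd l1); case: (odd l2).
Qed.

Lemma half_sum b : \sum_(x | ev u x == b) (deg e x)%:R =
  \sum_(x | ev u x == ~~ b) (deg e x)%:R :> R.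
Proof.
have L : forall b', \sum_(x | ev u x == b') (deg e x)%:R =
    \sum_x \sum_y (if (ev u x == b') && e x y then 1 else 0) :> R.
  move=> b'; rewrite big_mkcond; apply: eq_bigr => x _.
  rewrite -(deg_sum R e); case: ifP => _ /=; first by [].
  by rewrite big1.
rewrite !L [LHS]exchange_big /=; apply: eq_bigr => y _; apply: eq_bigr => x _.
rewrite [e x y]esym; case exy: (e y x); last by rewrite !andbF.
rewrite !andbT (E1 exy).
by case: (ev u y); case: b.
Qed.

Lemma half_val b : \sum_(x | ev u x == b) (deg e x)%:R = Ssum / 2 :> R.
Proof.
have : Ssum = \sum_(x | ev u x == b) (deg e x)%:R + \sum_(x | ev u x == ~~ b) (deg e x)%:R.
  rewrite /Ssum (bigID (fun x => ev u x == b)) /=; congr (_ + _).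
  by apply: eq_bigl => x; case: (ev u x); case: b.
by rewrite -(half_sum b) => ->; field.
Qed.

End Bipartite.

End Bip.


Section Conv.
Variables (R : realType) (V : finType) (e : rel V).
Hypothesis esym : symmetric e.
Hypothesis eirr : irreflexive e.
Hypothesis degP : forall x, (0 < deg e x)%N.
Hypothesis conn : forall x y, connect e x y.
Let h00 : (0:R) <= 0 := lexx 0.
Let h01 : (0:R) <= 1 := ler01.
Let h01s : (0:R) < 1 := ltr01.
Local Notation p0 k x y := (walk_dist e (0:R) x k y).
Local Notation S := (Ssum R e).

Lemma S_gt0 (w : V) : 0 < S.
Proof.
rewrite /Ssum (bigD1 w) //=; apply: ltr_pwDl; first by rewrite ltr0n degP.
by apply: sumr_ge0 => *; apply: ler0n.
Qed.

Lemma lazy_conv (g : R) : 0 < g -> g < 1 -> forall (w : V) (eps : R), 0 < eps ->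
  exists N, forall k, (N <= k)%N -> forall x,
  `|walk_dist e g w k x - (deg e x)%:R / S| <= eps.
Proof.
move=> gp g1s w eps eps0.
have g0 : 0 <= g by apply: ltW.
have g1 : g <= 1 by apply: ltW.
have hww : 0 < walk_dist e g w 1 w by rewrite wd_1 /trans eqxx.
have [n hn] : exists n, forall x m, predT x -> (n <= m)%N -> 0 < walk_dist e g x m w.
  apply: fin_eventually => x _.
  have [l hl] := conn_pos eirr degP g0 g1 g1s (conn x w).
  exists l => m hm; rewrite -(subnKC hm).
  apply: (pad g0 g1) => //.
  by have := pow_pos g0 g1 (m - l) hww; rewrite mul1n.
have [N HN] := conv_gen esym eirr degP g0 g1 (c := predT) (T := n.+1) (y0 := w) w
  (D := S) (ltn0Sn _) erefl (fun x _ => hn x n.+1 erefl (leqnSn n))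
  (fun x y _ (h : ~~ true) => False_ind _ (notF h)) erefl (S_gt0 w) eps0.
exists N => k hk x; apply: (HN k hk) => //.
exact: wd_sum.
Qed.

Lemma alleven_conv (u : V) : (forall z, ev R e u z) -> forall (w : V) (eps : R), 0 < eps ->
  exists N, forall k, (N <= k)%N -> forall x,
  `|p0 k w x - (deg e x)%:R / S| <= eps.
Proof.
move=> allev w eps eps0.
have [N HN] := conv_nonlazy esym eirr degP (c := predT) (y0 := w) w (D := S) erefl
  (fun x _ => all_ev_pos esym degP (allev x) (allev w))
  (fun x y m _ (h : ~~ true) => False_ind _ (notF h)) erefl (S_gt0 w) eps0.
exists N => k hk x; apply: (HN k hk) => //.
exact: wd_sum.
Qed.

Lemma bip_conv (u z0 : V) : ~~ ev R e u z0 -> forall (w : V) (eps : R), 0 < eps ->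
  exists N, forall k, (N <= k)%N -> forall x, ev R e u x = ev R e u w (+) odd k ->
  `|p0 k w x - (deg e x)%:R / (S / 2)| <= eps.
Proof.
move=> nz0 w eps eps0.
have Sh : 0 < S / 2 by apply: divr_gt0 => //; apply: S_gt0 w.
have H : forall b, exists N, forall k, (N <= k)%N ->
    \sum_(x | ev R e u x == b) p0 k w x = 1 ->
    forall x, ev R e u x == b -> `|p0 k w x - (deg e x)%:R / (S / 2)| <= eps.
  move=> b.
  have [y0 hy0] : exists y0, ev R e u y0 == b.
    by case: b; [exists u; rewrite ev_u | exists z0; rewrite (negbTE nz0)].
  apply: (conv_nonlazy esym eirr degP (c := fun x => ev R e u x == b) (y0 := y0) w
     (D := S / 2)) => //.
  - move=> x /eqP hx; apply: (class_pos esym eirr degP conn nz0).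
    by rewrite hx (eqP hy0).
  - move=> x y m /eqP hx hy; apply: (E2z eirr degP conn nz0).
    by rewrite oddM /= addbF hx.
  - exact: (half_val esym eirr degP conn nz0).
have [N1 H1] := H true.
have [N2 H2] := H false.
exists (maxn N1 N2) => k hk x hx.
have hsum : forall b, b = ev R e u w (+) odd k -> \sum_(x | ev R e u x == b) p0 k w x = 1.
  move=> b hb; rewrite -(wd_sum eirr degP 0 k w) big_mkcond /=; apply: eq_bigr => y _.
  case: eqP => // hy; rewrite (E2z eirr degP conn nz0) //.
  by rewrite -hb; apply/eqP.
case hb: (ev R e u x).
  apply: (H1 k) => //; first by apply: leq_trans hk; apply: leq_maxl.
    by apply: hsum; rewrite -hx hb.
  by rewrite hb.
apply: (H2 k) => //; first by apply: leq_trans hk; apply: leq_maxr.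
  by apply: hsum; rewrite -hx hb.
by rewrite hb.
Qed.

End Conv.


Lemma dist_tri (R : realType) (a b c e1 : R) :
  `|a - c| <= e1 -> `|b - c| <= e1 -> `|a - b| <= e1 + e1.
Proof. rewrite !ler_norml => /andP[h1 h2] /andP[h3 h4]; apply/andP; split; lra. Qed.

Lemma sum_constV (R : realType) (V : finType) (c : R) : \sum_(a : V) c = #|V|%:R * c.
Proof. by rewrite sumr_const mulr_natl. Qed.

Lemma W_single (R : realType) (V : finType) (e : rel V) (mu nu : V -> R) :
  (forall a b : V, a = b) -> wasserstein e mu nu <= 0.
Proof.
move=> single.
have [[T hT]|nT] := pselect (exists T, transport_plan mu nu T).
  apply: le_trans (W_le_cost e hT) _.
  rewrite /plan_cost big1 // => a _; rewrite big1 // => b _.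
  by rewrite (single b a) gdist_refl mul0r.
rewrite /wasserstein.
have -> : [set c | exists T, transport_plan mu nu T /\ c = plan_cost e T] = set0.
  by apply/seteqP; split => // c [T [hT _]]; apply: nT; exists T.
by rewrite inf0.
Qed.

Unset Implicit Arguments.
Theorem lemma5p6 (R : realType) (V : finType) (e : rel V) (u v : V)
  (alpha beta : R) :
  simple_connected_graph e ->
  0 <= alpha -> alpha <= beta -> beta <= 1 ->
  beta < 1 ->
  (fun k : nat => wasserstein e (walk_dist e alpha u k) (walk_dist e beta v k))
     @ \oo --> (2^-1 : R) ->
  exists N : nat, forall k : nat, (N <= k)%N ->
    let xi := fun w => walk_dist e alpha u k w - walk_dist e beta v k w in
    2^-1 * \sum_(w : V) `|xi w| = 2^-1 + 2^-1 * (1 - 2 * beta) ^+ k \/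
    2^-1 * \sum_(w : V) `|xi w| = 2^-1 - 2^-1 * (1 - 2 * beta) ^+ k.
Proof.
move=> [esy [eirr conn]] a0 ab b1 b1s hW.
have [N0 HN0] : exists N, forall k, (N <= k)%N ->
    1/4 < wasserstein e (walk_dist e alpha u k) (walk_dist e beta v k).
  have q0 : (0:R) < 1/4 by lra.
  move: hW => /cvgr_dist_lt /(_ _ q0) [N _ HN]; exists N => k hk.
  have h := HN k hk; have := ler_norm (2^-1 - wasserstein e (walk_dist e alpha u k) (walk_dist e beta v k)).
  move: h; set W := wasserstein _ _ _; move=> h1 h2; lra.
have [single|multi] := pselect (forall a b : V, a = b).
  exfalso; have := HN0 N0 (leqnn _); have := W_single e (walk_dist e alpha u N0) (walk_dist e beta v N0) single.
  lra.
have [a [b hab]] : exists a b : V, a != b.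
  have [//|none] := pselect (exists a b : V, a != b).
  exfalso; apply: multi => a b.
  by case: (eqVneq a b) => // h; exfalso; apply: none; exists a, b.
have degP : forall x, (0 < deg e x)%N.
  move=> x.
  have [y hy] : exists y, y != x.
    case: (eqVneq a x) => [ax|ax]; last by exists a.
    by exists b; rewrite -ax eq_sym.
  move: (conn x y) => /connectP [s ps ys].
  case: s ps ys => [|z s] /=; first by move=> _ yx; move: hy; rewrite yx eqxx.
  case/andP => exz _ _.
  rewrite -(ltr0n R) -deg_sum (bigD1 z) //= exz; apply: ltr_pwDl => //.
  by apply: sumr_ge0 => y' _; case: (e x y').
have nV : 0 < #|V|%:R :> R by rewrite ltr0n; apply/card_gt0P; exists a.
have b0 : 0 <= beta by apply: le_trans ab.
have contra : (forall eps : R, 0 < eps -> exists N, forall k, (N <= k)%N -> forall x,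
    `|walk_dist e alpha u k x - walk_dist e beta v k x| <= eps) -> False.
  move=> H.
  have eps0 : 0 < (8 * #|V|%:R * #|V|%:R)^-1 :> R.
    by rewrite invr_gt0; apply: mulr_gt0 => //; apply: mulr_gt0.
  have [N HN] := H _ eps0.
  set k := maxn N N0.
  have h1 := HN0 k (leq_maxr _ _).
  have h2 := W_bound e (wd_ge0 e a0 (le_trans ab b1) k u) (wd_ge0 e b0 b1 k v)
     (etrans (wd_sum eirr degP alpha k u) (esym (wd_sum eirr degP beta k v))).
  have h3 : \sum_a `|walk_dist e alpha u k a - walk_dist e beta v k a| <=
      #|V|%:R * (8 * #|V|%:R * #|V|%:R)^-1.
    apply: le_trans (_ : \sum_(a : V) (8 * #|V|%:R * #|V|%:R)^-1 <= _).
      by apply: ler_sum => x _; apply: HN; apply: leq_maxl.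
    by rewrite sum_constV.
  have h4 : #|V|%:R * (#|V|%:R * (8 * #|V|%:R * #|V|%:R)^-1) = 8^-1 :> R.
    by field; rewrite gt_eqF.
  have h5 := ler_wpM2l (ltW nV) h3.
  rewrite h4 in h5; lra.
have S0 := S_gt0 R degP a.
have [apos|ale0] := ltrP 0 alpha.
  exfalso; apply: contra => eps eps0.
  have bpos : 0 < beta by apply: lt_le_trans ab.
  have eps20 : 0 < eps / 2 by apply: divr_gt0.
  have [N1 H1] := lazy_conv esy eirr degP conn apos (le_lt_trans ab b1s) u eps20.
  have [N2 H2] := lazy_conv esy eirr degP conn bpos b1s v eps20.
  exists (maxn N1 N2) => k hk x.
  have := dist_tri (H1 k (leq_trans (leq_maxl _ _) hk) x) (H2 k (leq_trans (leq_maxr _ _) hk) x).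
  by have -> : eps / 2 + eps / 2 = eps by field.
have a00 : alpha = 0 by apply/eqP; rewrite eq_le ale0 a0.
subst alpha.
have [allev | nall] := pselect (forall z, ev R e u z).
  exfalso; apply: contra => eps eps0.
  have eps20 : 0 < eps / 2 by apply: divr_gt0.
  have [N1 H1] := alleven_conv esy eirr degP allev u eps20.
  have [N2 H2] : exists N, forall k, (N <= k)%N -> forall x,
      `|walk_dist e beta v k x - (deg e x)%:R / Ssum R e| <= eps / 2.
    have [bpos|ble0] := ltrP 0 beta.
      exact (lazy_conv esy eirr degP conn bpos b1s v eps20).
    have -> : beta = 0 by apply/eqP; rewrite eq_le ble0 b0.
    exact (alleven_conv esy eirr degP allev v eps20).
  exists (maxn N1 N2) => k hk x.
  have := dist_tri (H1 k (leq_trans (leq_maxl _ _) hk) x) (H2 k (leq_trans (leq_maxr _ _) hk) x).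
  by have -> : eps / 2 + eps / 2 = eps by field.
have [z0 nz0] : exists z0, ~~ ev R e u z0.
  have [z0 hz0] := (existsNP _).2 nall; exists z0; exact/negP.
have evu := ev_u R e u.
have mu_off : forall (k : nat) (x : V), ev R e u x != ~~ odd k -> walk_dist e (0:R) u k x = 0.
  move=> k x hx.
  have h : ev R e u x != ev R e u u (+) odd k by rewrite evu.
  exact (E2z eirr degP conn nz0 h).
have [bpos|ble0] := ltrP 0 beta; last first.
  have b00 : beta = 0 by apply/eqP; rewrite eq_le ble0 b0.
  subst beta.
  have nu_off : forall (k : nat) (x : V), ev R e u x != ev R e u v (+) odd k ->
      walk_dist e (0:R) v k x = 0.
    by move=> k x hx; exact (E2z eirr degP conn nz0 hx).
  case evv: (ev R e u v).
    exfalso; apply: contra => eps eps0.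
    have eps20 : 0 < eps / 2 by apply: divr_gt0.
    have [N1 H1] := bip_conv esy eirr degP conn nz0 u eps20.
    have [N2 H2] := bip_conv esy eirr degP conn nz0 v eps20.
    exists (maxn N1 N2) => k hk x.
    case cx: (ev R e u x == ~~ odd k).
      have hxu : ev R e u x = ev R e u u (+) odd k by rewrite evu (eqP cx).
      have hxv : ev R e u x = ev R e u v (+) odd k by rewrite evv (eqP cx).
      have := dist_tri (H1 k (leq_trans (leq_maxl _ _) hk) x hxu)
                       (H2 k (leq_trans (leq_maxr _ _) hk) x hxv).
      by have -> : eps / 2 + eps / 2 = eps by field.
    rewrite mu_off ?cx // nu_off; first by rewrite subrr normr0 ltW.
    by rewrite evv addTb cx.
  exists 0%N => k _ /=; left.
  have E : forall x, `|walk_dist e (0:R) u k x - walk_dist e (0:R) v k x| =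
      walk_dist e (0:R) u k x + walk_dist e (0:R) v k x.
    move=> x; case cx: (ev R e u x == ~~ odd k).
      rewrite (nu_off k x); first by rewrite subr0 addr0 ger0_norm // wd_ge0.
      by rewrite evv addFb (eqP cx); case: (odd k).
    rewrite mu_off ?cx // sub0r normrN add0r ger0_norm //.
    exact: wd_ge0.
  under eq_bigr do rewrite E.
  rewrite big_split /= !(wd_sum eirr degP) mulr0 subr0 expr1n.
  by field.
pose S := Ssum R e.
pose eps := S^-1 / 4.
have eps0 : 0 < eps by apply: divr_gt0 => //; rewrite invr_gt0.
have [N1 H1] := bip_conv esy eirr degP conn nz0 u eps0.
have [N2 H2] := lazy_conv esy eirr degP conn bpos b1s v eps0.
exists (maxn N1 N2) => k hk /=.
have key : forall x, `|walk_dist e (0:R) u k x - walk_dist e beta v k x| =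
    walk_dist e (0:R) u k x - (if ev R e u x == ~~ odd k then 1 else -1) * walk_dist e beta v k x.
  move=> x; case cx: (ev R e u x == ~~ odd k); last first.
    rewrite mu_off ?cx // sub0r normrN ger0_norm; last exact: wd_ge0.
    by rewrite mulN1r opprK add0r.
  have hxu : ev R e u x = ev R e u u (+) odd k by rewrite evu (eqP cx).
  have h1 := H1 k (leq_trans (leq_maxl _ _) hk) x hxu.
  have h2 := H2 k (leq_trans (leq_maxr _ _) hk) x.
  have dS : (deg e x)%:R / (S / 2) = 2 * ((deg e x)%:R / S) :> R.
    by field; rewrite gt_eqF.
  have d1 : S^-1 <= (deg e x)%:R / S.
    rewrite -[X in X <= _]mul1r; apply: ler_wpM2r; first by rewrite invr_ge0 ltW.
    by rewrite ler1n degP.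
  rewrite dS in h1; rewrite mul1r ger0_norm //.
  move: h1 h2; rewrite !ler_norml /eps => /andP[h1 h1'] /andP[h2 h2'].
  lra.
under eq_bigr do rewrite key.
rewrite sumrB (wd_sum eirr degP).
have sgn : forall x, (if ev R e u x == ~~ odd k then 1 else -1) =
    (-1) ^+ k * (if ev R e u x then 1 else -1) :> R.
  move=> x; rewrite -signr_odd; case: (odd k); case: (ev R e u x) => /=;
  rewrite ?expr0 ?expr1; ring.
under eq_bigr do rewrite sgn -mulrA.
rewrite -big_distrr /=.
have sE : forall x y, e x y -> ev R e u y = ~~ ev R e u x.
  by move=> x y h; exact (E1 eirr degP conn nz0 h).
rewrite (eigen eirr degP sE beta k v) mulrA -exprMn.
have -> : (-1) * (2 * beta - 1) = 1 - 2 * beta by ring.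
case: (ev R e u v) => /=; [right | left]; ring.
Qed.
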